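(* Let $G=H\oplus_2 K$ be a $2$-sum of $2$-connected cubic graphs $H$ and $K$, where $K$ is $3$-edge-colourable. Then $\pi(G)\ge 5$ if and only if $\pi(H)\ge 5$.
   Context: Graphs are finite; loops and multiple edges are allowed. For a bridgeless cubic graph $G$, the perfect matching index $\pi(G)$ is the smallest number of perfect matchings of $G$ whose union is $E(G)$. A $2$-sum $H\oplus_2 K$ with distinguished edges $e\in E(H)$, $f\in E(K)$ is obtained by deleting $e$ and $f$ and joining the two $2$-valent vertices of $H-e$ to the two $2$-valent vertices of $K-f$ by two new independent edges. *)

(* Defs.v *)
From mathcomp Require Import all_boot.
Set Implicit Arguments. Unset Strict Implicit. Unset Printing Implicit Defensive.

(* A loop has equal endpoints;
   parallel edges are distinct edges with the same endpoints. *)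
Record mgraph := MGraph {
  vert : finType;
  edge : finType;
  ends : edge -> vert * vert
}.

Section Basics.
Variable G : mgraph.

Definition incident (x : edge G) (v : vert G) : bool :=
  ((ends x).1 == v) || ((ends x).2 == v).

Definition is_loop (x : edge G) : bool := (ends x).1 == (ends x).2.

(* degree; a loop counts twice *)
Definition deg (v : vert G) : nat :=
  #|[set x : edge G | (ends x).1 == v]| + #|[set x : edge G | (ends x).2 == v]|.

Definition cubic : Prop := forall v : vert G, deg v = 3.

Definition adj (u v : vert G) : bool :=
  [exists x : edge G, (ends x == (u, v)) || (ends x == (v, u))].

Definition connected_on (S : {set vert G}) : Prop :=
  forall u v, u \in S -> v \in S ->
    connect (fun a b => [&& a \in S, b \in S & adj a b]) u v.

Definition connected : Prop := connected_on setT.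

Definition two_connected : Prop :=
  [/\ forall x : edge G, ~~ is_loop x,
      connected &
      forall v : vert G, connected_on (setT :\ v)].

Definition three_edge_colourable : Prop :=
  exists c : edge G -> 'I_3,
    (forall x, ~~ is_loop x) /\
    (forall x y (v : vert G), x != y -> incident x v -> incident y v ->
        c x != c y).

Definition perfect_matching (M : {set edge G}) : Prop :=
  (forall x, x \in M -> ~~ is_loop x) /\
  (forall v : vert G, #|[set x in M | incident x v]| = 1).

Definition pm_cover (k : nat) : Prop :=
  exists M : 'I_k -> {set edge G},
    (forall i, perfect_matching (M i)) /\ (forall x, exists i, x \in M i).

(* pi(G) >= n : every cover of E(G) by perfect matchings uses >= n of them *)
Definition pmi_ge (n : nat) : Prop := forall k, pm_cover k -> n <= k.

End Basics.

(* 2-sum H (+)_2 K along e in E(H) with ends (a,b) and f in E(K) with ends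
   (c,d): delete e and f, add two new independent edges.  If swap = false
   the new edges are ac and bd; if swap = true they are ad and bc. *)
Section TwoSum.
Variables (H K : mgraph) (e : edge H) (f : edge K) (swap : bool).

Definition ts_vert : finType := (vert H + vert K)%type.
Definition ts_edge : finType :=
  ({x : edge H | x != e} + {y : edge K | y != f} + bool)%type.

Definition ts_ends (z : ts_edge) : ts_vert * ts_vert :=
  match z with
  | inl (inl x) => (inl (ends (val x)).1, inl (ends (val x)).2)
  | inl (inr y) => (inr (ends (val y)).1, inr (ends (val y)).2)
  | inr false => (inl (ends e).1,
                  inr (if swap then (ends f).2 else (ends f).1))
  | inr true => (inl (ends e).2,
                 inr (if swap then (ends f).1 else (ends f).2))
  end.

Definition two_sum : mgraph := @MGraph ts_vert ts_edge ts_ends.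
End TwoSum.

(* Main.v *)
Require Import Defs.
From mathcomp Require Import all_boot.
Set Implicit Arguments. Unset Strict Implicit. Unset Printing Implicit Defensive.

Lemma card1_iff (T : finType) (A : {set T}) :
  #|A| = 1 <-> (exists x, x \in A) /\ {in A &, forall x y, x = y}.
Proof.
split.
  move/eqP/cards1P=> [x ->]; split; first by exists x; rewrite in_set1.
  by move=> y z; rewrite !in_set1 => /eqP-> /eqP->.
move=> [[x xA] U]; apply/eqP/cards1P; exists x; apply/setP=> y; rewrite in_set1.
apply/idP/eqP=> [yA|->//]; exact: U.
Qed.

Section Gen.
Variable G : mgraph.

Definition PM' (M : {set edge G}) :=
  (forall x, x \in M -> ~~ is_loop x) /\
  forall v, (exists x, x \in M /\ incident x v) /\
     (forall x y, x \in M -> y \in M -> incident x v -> incident y v -> x = y).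

Lemma pmP M : perfect_matching M <-> PM' M.
Proof.
split=> [[L P]|[L P]]; split=> // v.
  have [[x] xin U] := (card1_iff _).1 (P v).
  split; first by exists x; move: xin; rewrite inE => /andP[].
  move=> x1 y1 x1M y1M ix iy; apply: U; rewrite inE ?x1M ?y1M //; apply/andP; split=> //.
apply/card1_iff; have [[x [xM ix]] U] := P v; split.
  by exists x; rewrite inE xM.
by move=> y z; rewrite !inE => /andP[yM iy] /andP[zM iz]; apply: U.
Qed.

Lemma inc3 (v : vert G) : (forall x : edge G, ~~ is_loop x) -> deg v = 3 ->
  #|[set x : edge G | incident x v]| = 3.
Proof.
move=> L; rewrite /deg.
set A1 := [set x | _ == v]; set A2 := [set x | _ == v].
have -> : [set x | incident x v] = A1 :|: A2 by apply/setP=> x; rewrite !inE.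
have E : A1 :&: A2 = set0.
  apply/setP=> x; rewrite !inE; apply/negbTE/andP=> [[/eqP h1 /eqP h2]].
  by move: (L x); rewrite /is_loop h1 h2 eqxx.
by move=> <-; rewrite -cardsUI E cards0 addn0.
Qed.

Lemma sum_preim (T U : finType) (p : T -> U) :
  \sum_(u : U) #|[set x | p x == u]| = #|T|.
Proof.
rewrite -sum1_card (partition_big p predT) //; apply eq_bigr => u _.
rewrite -sum1_card; apply: eq_bigl => x; rewrite inE.
by [].
Qed.

Lemma even_cubic : cubic G -> ~~ odd #|vert G|.
Proof.
move=> C.
have : \sum_(v : vert G) deg v = #|edge G| + #|edge G|.
  by rewrite big_split /= !sum_preim.
rewrite (eq_bigr (fun _ => 3)) // sum_nat_const cardT -cardE addnn => /(f_equal odd).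
by rewrite odd_double oddM andbT => ->.
Qed.

End Gen.

Lemma double_count (T U : finType) (A : {set T}) (P : T -> U -> bool) :
  \sum_(u : U) #|[set t in A | P t u]| = \sum_(t in A) #|[set u | P t u]|.
Proof.
transitivity (\sum_(u : U) \sum_(t in A) (P t u : nat)).
  apply eq_bigr => u _; rewrite -sum1_card big_mkcond [RHS]big_mkcond.
  by apply eq_bigr => t _; rewrite inE; case: (t \in A); case: P.
rewrite exchange_big; apply eq_bigr => t _; rewrite -sum1_card [RHS]big_mkcond.
by apply eq_bigr => u _; rewrite inE; case: P.
Qed.

Lemma sum_eq1 (T : finType) (A : {set T}) (c : T) :
  \sum_(z in A) (z == c : nat) = (c \in A).
Proof.
case cA: (c \in A).
  rewrite (bigD1 c) //= eqxx big1 // => z /andP[_ /negbTE->] //.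
rewrite big1 // => z zA; case: eqP => // zc; by rewrite -zc zA in cA.
Qed.

Section TS.
Variables (H K : mgraph) (e : edge H) (f : edge K) (swap : bool).
Local Notation G := (two_sum e f swap).
Hypothesis LH : forall x : edge H, ~~ is_loop x.
Hypothesis LK : forall x : edge K, ~~ is_loop x.
Hypothesis CH : cubic H.

Definition hend (b : bool) := if b then (ends e).2 else (ends e).1.
Definition kend (b : bool) :=
  if b then (if swap then (ends f).1 else (ends f).2)
  else (if swap then (ends f).2 else (ends f).1).

Lemma hend_neq : hend false != hend true.
Proof. exact: LH. Qed.
Lemma kend_neq : kend false != kend true.
Proof. by rewrite /kend; case: swap; [rewrite eq_sym|]; apply: LK. Qed.

Lemma inc_ll x v : @incident G (inl (inl x)) (inl v) = incident (val x) v.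
Proof. by []. Qed.
Lemma inc_lr y v : @incident G (inl (inr y)) (inl v) = false.
Proof. by []. Qed.
Lemma inc_b b v : @incident G (inr b) (inl v) = (v == hend b).
Proof. by case: b; rewrite /incident /= ?orbF eq_sym. Qed.
Lemma inc_rr y w : @incident G (inl (inr y)) (inr w) = incident (val y) w.
Proof. by []. Qed.
Lemma inc_rl x w : @incident G (inl (inl x)) (inr w) = false.
Proof. by []. Qed.
Lemma inc_bk b w : @incident G (inr b) (inr w) = (w == kend b).
Proof. by case: b; rewrite /incident /= eq_sym. Qed.

Lemma inc_e v : incident e v = (v == hend false) || (v == hend true).
Proof. by rewrite /incident /hend !(eq_sym v). Qed.
Lemma inc_f w : incident f w = (w == kend false) || (w == kend true).
Proof. by rewrite /incident /kend; case: swap; rewrite !(eq_sym w) // orbC. Qed.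

Lemma hend_inj b1 b2 : hend b1 = hend b2 -> b1 = b2.
Proof. by case: b1; case: b2 => // h; move: hend_neq; rewrite h eqxx. Qed.
Lemma kend_inj b1 b2 : kend b1 = kend b2 -> b1 = b2.
Proof. by case: b1; case: b2 => // h; move: kend_neq; rewrite h eqxx. Qed.

Lemma inc_e_ex v : incident e v -> exists b, v = hend b.
Proof. by rewrite inc_e => /orP[/eqP->|/eqP->]; eexists. Qed.
Lemma inc_f_ex w : incident f w -> exists b, w = kend b.
Proof. by rewrite inc_f => /orP[/eqP->|/eqP->]; eexists. Qed.
Lemma hend_inc b : incident e (hend b).
Proof. by rewrite inc_e; case: b; rewrite eqxx ?orbT. Qed.
Lemma kend_inc b : incident f (kend b).
Proof. by rewrite inc_f; case: b; rewrite eqxx ?orbT. Qed.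

Definition isll (z : edge G) : bool := if z is inl (inl _) then true else false.

Lemma wcount (z : edge G) :
  #|[set v : vert H | incident z (inl v)]| =
  2 * isll z + (z == inr false) + (z == inr true).
Proof.
case: z => [[x|y]|b].
- have -> : [set v : vert H | @incident G (inl (inl x)) (inl v)] =
            [set (ends (val x)).1; (ends (val x)).2].
    by apply/setP=> v; rewrite !inE inc_ll /incident !(eq_sym v).
  by rewrite cards2 LH.
- have -> : [set v : vert H | @incident G (inl (inr y)) (inl v)] = set0.
    by apply/setP=> v; rewrite !inE.
  by rewrite cards0.
- have -> : [set v : vert H | @incident G (inr b) (inl v)] = [set hend b].
    by apply/setP=> v; rewrite !inE inc_b.
  by rewrite cards1; case: b.
Qed.

Lemma parity (N : {set edge G}) : perfect_matching N ->
  (inr false \in N) = (inr true \in N).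
Proof.
move=> [_ P].
have E : #|vert H| = \sum_(v : vert H) #|[set z in N | incident z (inl v)]|.
  by rewrite (eq_bigr (fun _ => 1)) ?sum1_card ?cardT ?cardE // => v _; apply: P.
rewrite double_count (eq_bigr _ (fun z _ => wcount z)) !big_split /=
  !sum_eq1 in E.
move: (even_cubic CH); rewrite E sum_nat_const muln0 addn0 addnn !oddD odd_double /=.
by case: (inr false \in N); case: (inr true \in N).
Qed.

Definition restrH (N : {set edge G}) : {set edge H} :=
  [set x | if @insub _ (fun x => x != e) {x : edge H | x != e} x is Some x'
           then (inl (inl x') : edge G) \in N else (inr false : edge G) \in N].

Lemma restr_e N : (e \in restrH N) = (inr false \in N).
Proof. by rewrite inE insubF // eqxx. Qed.
Lemma restr_ne N (x : {x : edge H | x != e}) :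
  (val x \in restrH N) = (inl (inl x) \in N).
Proof. by rewrite inE valK. Qed.

Lemma restr_pm N : perfect_matching N -> PM' (restrH N).
Proof.
move=> PN; have par := parity PN; move/pmP: PN => [_ P].
split=> [x _|v]; first exact: LH.
have [[z [zN iz]] U] := P (inl v).
have inrN b : (inr b \in N) = (inr false \in N) by case: b; rewrite // par.
split.
  move: zN iz; case: z => [[x|y]|b] zN iz.
  - by exists (val x); rewrite restr_ne -inc_ll.
  - by rewrite inc_lr in iz.
  - exists e; split; first by rewrite restr_e -(inrN b).
    by rewrite inc_b in iz; rewrite (eqP iz) hend_inc.
move=> x y; case: (eqVneq x e) => [->|xe]; case: (eqVneq y e) => [->|ye] //.
- move=> eN yN ie iy; have [b hb] := inc_e_ex ie.
  have := U (inr b) (inl (inl (exist _ y ye))).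
  rewrite inrN -restr_e eN -(restr_ne N (exist _ y ye)) yN inc_b hb eqxx inc_ll /= -hb iy.
  by move=> /(_ isT isT isT isT).
- move=> xN eN ix ie; have [b hb] := inc_e_ex ie.
  have := U (inr b) (inl (inl (exist _ x xe))).
  rewrite inrN -restr_e eN -(restr_ne N (exist _ x xe)) xN inc_b hb eqxx inc_ll /= -hb ix.
  by move=> /(_ isT isT isT isT).
- move=> xN yN ix iy.
  have := U (inl (inl (exist _ x xe))) (inl (inl (exist _ y ye))).
  rewrite -(restr_ne N (exist _ x xe)) xN -(restr_ne N (exist _ y ye)) yN !inc_ll /= ix iy.
  by move=> /(_ isT isT isT isT) [].
Qed.

Definition glue (M : {set edge H}) (C : {set edge K}) : {set edge G} :=
  [set z : edge G | match z with
                    | inl (inl x) => val x \in M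
                    | inl (inr y) => val y \in C
                    | inr _ => e \in M end].

Lemma glue_pm M C : PM' M -> PM' C -> (e \in M) = (f \in C) -> PM' (glue M C).
Proof.
move=> [_ PM] [_ PC] ef; split.
  case=> [[x|y]|b] _.
  - exact: (LH (val x)).
  - exact: (LK (val y)).
  - by case: b.
move=> [v|w].
  have [[x [xM ix]] U] := PM v; split.
    case: (eqVneq x e) => [xe|xe].
      rewrite xe in ix xM; have [b hb] := inc_e_ex ix.
      by exists (inr b); rewrite inc_b hb eqxx inE.
    by exists (inl (inl (exist _ x xe))); rewrite inc_ll !inE.
  move=> z1 z2; case: z1 => [[x1|y1]|b1]; case: z2 => [[x2|y2]|b2];
    rewrite ?inc_ll ?inc_lr ?inc_b !inE //=.
  - by move=> x1M x2M i1 i2; have /val_inj-> := U _ _ x1M x2M i1 i2.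
  - move=> x1M eM i1 /eqP hb; have h := U _ _ x1M eM i1 (etrans (f_equal _ hb) (hend_inc b2)).
    exfalso; move: h; clear -x1; case: x1 => ? ne /= h; by rewrite h eqxx in ne.
  - move=> eM x2M /eqP hb i2; have h := U _ _ x2M eM i2 (etrans (f_equal _ hb) (hend_inc b1)).
    exfalso; move: h; clear -x2; case: x2 => ? ne /= h; by rewrite h eqxx in ne.
  - by move=> _ _ /eqP h1 /eqP h2; congr inr; apply: hend_inj; rewrite -h1 -h2.
have [[y [yC iy]] U] := PC w; split.
  case: (eqVneq y f) => [yf|yf].
    rewrite yf in iy yC; have [b hb] := inc_f_ex iy.
    by exists (inr b); rewrite inc_bk hb eqxx inE /= ef.
  by exists (inl (inr (exist _ y yf))); rewrite inc_rr !inE.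
move=> z1 z2; case: z1 => [[x1|y1]|b1]; case: z2 => [[x2|y2]|b2];
  rewrite ?inc_rr ?inc_rl ?inc_bk !inE //= ?ef.
- by move=> y1C y2C i1 i2; have /val_inj-> := U _ _ y1C y2C i1 i2.
- move=> y1C fC i1 /eqP hb; have h := U _ _ y1C fC i1 (etrans (f_equal _ hb) (kend_inc b2)).
  exfalso; move: h; clear -y1; case: y1 => ? ne /= h; by rewrite h eqxx in ne.
- move=> fC y2C /eqP hb i2; have h := U _ _ y2C fC i2 (etrans (f_equal _ hb) (kend_inc b1)).
  exfalso; move: h; clear -y2; case: y2 => ? ne /= h; by rewrite h eqxx in ne.
- by move=> _ _ /eqP h1 /eqP h2; congr inr; apply: kend_inj; rewrite -h1 -h2.
Qed.

End TS.

Lemma tri (T : finType) (A : {set T}) a : #|A| = 3 -> a \in A ->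
  exists x y, [/\ x \in A, y \in A, x != a, y != a & x != y] /\
               forall z, z \in A -> [|| z == a, z == x | z == y].
Proof.
move=> cA aA; have : #|A :\ a| == 2 by move: (cardsD1 a A); rewrite cA aA => h; apply/eqP; by case: h.
case/cards2P => x [y [xy E]].
have : x \in A :\ a by rewrite E !inE eqxx.
have : y \in A :\ a by rewrite E !inE eqxx orbT.
move=> /setD1P[ya yA] /setD1P[xa xA]; exists x, y; split=> // z zA.
case: (eqVneq z a) => //= za.
have : z \in A :\ a by rewrite !inE za zA.
by rewrite E !inE.
Qed.

Lemma colour_pm (K : mgraph) (c : edge K -> 'I_3) j :
  cubic K -> (forall x : edge K, ~~ is_loop x) ->
  (forall x y (v : vert K), x != y -> incident x v -> incident y v -> c x != c y) ->
  PM' [set y | c y == j].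
Proof.
move=> CK LK Col; split=> [x _|w]; first exact: LK.
set I := [set y | incident y w].
have cI : #|I| = 3 by apply: inc3.
have inj : {in I &, injective c}.
  move=> x y; rewrite !inE => ix iy cxy; apply/eqP/negPn/negP => nxy.
  by move: (Col x y w nxy ix iy); rewrite cxy eqxx.
have full : c @: I = setT.
  by apply/eqP; rewrite eqEcard subsetT cardsT card_ord card_in_imset // cI.
split.
  have : j \in c @: I by rewrite full inE.
  by case/imsetP => y; rewrite inE => iy ->; exists y; rewrite !inE eqxx.
move=> x y; rewrite !inE => /eqP cx /eqP cy ix iy; apply: inj; rewrite ?inE //.
by rewrite cx cy.
Qed.

Section Main.
Variables (H K : mgraph) (e : edge H) (f : edge K) (swap : bool).
Local Notation G := (two_sum e f swap).
Hypothesis LH : forall x : edge H, ~~ is_loop x.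
Hypothesis LK : forall x : edge K, ~~ is_loop x.
Hypothesis CH : cubic H.
Hypothesis CK : cubic K.

Lemma cover_GH k : pm_cover G k -> pm_cover H k.
Proof.
move=> [N [PN cov]]; exists (fun i => restrH (N i)); split.
  by move=> i; apply/pmP; apply: restr_pm.
move=> x; case: (eqVneq x e) => [->|xe].
  by have [i iN] := cov (inr false); exists i; rewrite restr_e.
have [i iN] := cov (inl (inl (exist _ x xe))); exists i.
by have := restr_ne (N i) (exist _ x xe); rewrite /= => ->.
Qed.

Lemma cover_HG k : three_edge_colourable K -> pm_cover H k -> pm_cover G k.
Proof.
move=> [c [_ Col]] [M [PMs cov]].
have PM i : PM' (M i) by apply/pmP.
pose a := hend e false.
have cI : #|[set x | incident x a]| = 3 by apply: inc3.
have eI : e \in [set x | incident x a] by rewrite inE hend_inc.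
have [x [y [[xI yI xe ye xy] _]]] := tri cI eI.
move: xI yI; rewrite !inE => ix iy.
have [i1 x1] := cov x; have [i2 y2] := cov y; have [i0 e0] := cov e.
have ne1 : e \notin M i1.
  apply/negP => eM; have := (PM i1).2 a; case=> _ U.
  by move: xe; rewrite (U _ _ x1 eM ix (hend_inc _ _)) eqxx.
have ne2 : e \notin M i2.
  apply/negP => eM; have := (PM i2).2 a; case=> _ U.
  by move: ye; rewrite (U _ _ y2 eM iy (hend_inc _ _)) eqxx.
have n12 : i2 != i1.
  apply/negP => /eqP h; rewrite h in y2; have := (PM i1).2 a; case=> _ U.
  by move: xy; rewrite (U _ _ x1 y2 ix iy) eqxx.
have [j1 [j2 [[_ _ j1f j2f _] allj]]] := tri (etrans (cardsT _) (card_ord 3)) (in_setT (c f)).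
pose Kp i := [set y | c y == (if e \in M i then c f else if i == i1 then j1 else j2)].
exists (fun i => glue e f swap (M i) (Kp i)); split.
  move=> i; apply/pmP; apply: glue_pm => //; first by apply: colour_pm.
  rewrite inE; case: (e \in M i); first by rewrite eqxx.
  by case: (i == i1); rewrite eq_sym; [rewrite (negbTE j1f)|rewrite (negbTE j2f)].
case=> [[x'|y']|b].
- by have [i iM] := cov (val x'); exists i; rewrite inE.
- have := allj (c (val y')) (in_setT _); case/or3P => /eqP h.
  + by exists i0; rewrite !inE /= e0 h.
  + by exists i1; rewrite !inE /= (negbTE ne1) eqxx h.
  + by exists i2; rewrite !inE /= (negbTE ne2) (negbTE n12) h.
- by exists i0; rewrite inE.
Qed.

End Main.

Theorem lemma6p4 (H K : mgraph) (e : edge H) (f : edge K) (swap : bool) :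
  cubic H -> cubic K -> two_connected H -> two_connected K ->
  three_edge_colourable K ->
  (pmi_ge (two_sum e f swap) 5 <-> pmi_ge H 5).
Proof.
move=> CH CK [LH _ _] [LK _ _] TEC; split=> P k cov; apply: P.
  exact: (cover_HG e f swap LH LK CH CK TEC cov).
exact: (cover_GH LH CH cov).
Qed.
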